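(* Let $M$, $h_r$, $a_r=h_r(0)$ be as described, and define $K_r(u)=e^{-a_r/n}\big(h_r(u)-a_r\big)$ for $u\in[0,r)$. Then $K_r$ solves $K_r''(K_r')^{n-1}=\exp\big(e^{a_r/n}K_r\big)\mathcal D_M(u)$ on $[0,r)$ with $K_r\to\infty$ as $u\to r$ (so it is a Kähler potential of the complete Kähler–Einstein metric of Ricci curvature $-e^{a_r/n}$ on $T^rM$), $K_r\ge0$, and as $r\to\infty$ the family $\{K_r\}$ converges uniformly on compact subsets of $[0,\infty)$ to a continuous function $K$.
   Context: $M$ is $\mathbb R^n$ or a compact rank-one symmetric space of real dimension $n\ge2$; $u=\sqrt\rho$, $\rho(x,v)=4|v|^2$ on $TM$ with the adapted complex structure; $T^rM=\{|v|<r/2\}$. $\mathcal D_M(u)=u^{n-1}$ for $\mathbb R^n$; $(\sinh u)^{n-1}$ for the round sphere and real projective space; $2^{n-1}(\cosh\frac u2)^k(\sinh\frac u2)^{n-1}$, $k=1,3,7$, for complex projective space, quaternionic projective space, Cayley plane. For $r>0$, $h_r$ is the unique solution, real-analytic in $u^2$, of $h_r''(h_r')^{n-1}=e^{h_r}\mathcal D_M(u)$ on $[0,r)$ with $\lim_{u\to r}h_r=\infty$. *)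

(* Defs.v *)
From Stdlib Require Import Reals Lra.
Open Scope R_scope.

Inductive model_space : Type :=
  | Euclid | Sphere | RealProj | CxProj | QuatProj | CayleyPlane.

Definition valid_dim (M : model_space) (n : nat) : Prop :=
  match M with
  | Euclid | Sphere | RealProj => (2 <= n)%nat
  | CxProj => (2 <= n)%nat /\ Nat.Even n
  | QuatProj => (4 <= n)%nat /\ exists m, n = (4 * m)%nat
  | CayleyPlane => n = 16%nat
  end.

Definition DM (M : model_space) (n : nat) (u : R) : R :=
  match M with
  | Euclid => u ^ (n - 1)
  | Sphere | RealProj => (sinh u) ^ (n - 1)
  | CxProj => 2 ^ (n - 1) * (cosh (u / 2)) ^ 1 * (sinh (u / 2)) ^ (n - 1)
  | QuatProj => 2 ^ (n - 1) * (cosh (u / 2)) ^ 3 * (sinh (u / 2)) ^ (n - 1)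
  | CayleyPlane => 2 ^ (n - 1) * (cosh (u / 2)) ^ 7 * (sinh (u / 2)) ^ (n - 1)
  end.

Definition analytic_on (g : R -> R) (a b : R) : Prop :=
  forall x0, a < x0 < b ->
    exists (c : nat -> R) (d : R), 0 < d /\
      forall x, Rabs (x - x0) < d ->
        infinite_sum (fun k => c k * (x - x0) ^ k) (g x).

Definition analytic_in_u2 (r : R) (f : R -> R) : Prop :=
  exists (g : R -> R) (eps : R), 0 < eps /\ analytic_on g (- eps) (r ^ 2) /\
    forall u, - r < u < r -> f u = g (u ^ 2).

Definition solves_ode (M : model_space) (n : nat) (c r : R) (f : R -> R) : Prop :=
  exists f1 f2 : R -> R,
    (forall u, - r < u < r ->
        derivable_pt_lim f u (f1 u) /\ derivable_pt_lim f1 u (f2 u)) /\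
    (forall u, 0 <= u < r ->
        f2 u * (f1 u) ^ (n - 1) = exp (c * f u) * DM M n u).

Definition blows_up_at (r : R) (f : R -> R) : Prop :=
  forall B : R, exists d, 0 < d /\ forall u, r - d < u < r -> B < f u.

Definition is_h (M : model_space) (n : nat) (r : R) (f : R -> R) : Prop :=
  analytic_in_u2 r f /\ solves_ode M n 1 r f /\ blows_up_at r f.

Definition Kfun (n : nat) (hr : R -> R) (u : R) : R :=
  exp (- (hr 0) / INR n) * (hr u - hr 0).

(* Main.v *)
Require Import Defs.
From Stdlib Require Import Reals Lra Lia Ranalysis5.
Open Scope R_scope.

Lemma dval f x l l' : derivable_pt_lim f x l -> l = l' -> derivable_pt_lim f x l'.
Proof. intros H ->; exact H. Qed.
Lemma dmul f g x l1 l2 : derivable_pt_lim f x l1 -> derivable_pt_lim g x l2 ->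
  derivable_pt_lim (fun y => f y * g y) x (l1 * g x + f x * l2).
Proof. intros; apply derivable_pt_lim_mult; auto. Qed.
Lemma dcomp f g x l1 l2 : derivable_pt_lim f x l1 -> derivable_pt_lim g (f x) l2 ->
  derivable_pt_lim (fun y => g (f y)) x (l2 * l1).
Proof. intros; apply (derivable_pt_lim_comp f g); auto. Qed.
Lemma dpow f x l m : derivable_pt_lim f x l ->
  derivable_pt_lim (fun y => f y ^ m) x (INR m * f x ^ pred m * l).
Proof. intros; apply (dcomp f (fun y => y ^ m)); auto. apply derivable_pt_lim_pow. Qed.
Lemma dexp f x l : derivable_pt_lim f x l ->
  derivable_pt_lim (fun y => exp (f y)) x (exp (f x) * l).
Proof. intros; apply (dcomp f exp); auto. apply derivable_pt_lim_exp. Qed.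
Lemma dscal f x l a : derivable_pt_lim f x l ->
  derivable_pt_lim (fun y => a * f y) x (a * l).
Proof. intros; apply (derivable_pt_lim_scal f a x l); auto. Qed.
Lemma dplusc f x l b : derivable_pt_lim f x l ->
  derivable_pt_lim (fun y => f y + b) x l.
Proof. intros. apply (dval _ _ (l + 0)); [|ring].
  apply (derivable_pt_lim_plus f (fct_cte b)); auto. apply derivable_pt_lim_const. Qed.
Lemma dminus f g x l1 l2 : derivable_pt_lim f x l1 -> derivable_pt_lim g x l2 ->
  derivable_pt_lim (fun y => f y - g y) x (l1 - l2).
Proof. intros; apply derivable_pt_lim_minus; auto. Qed.
Lemma did x : derivable_pt_lim (fun y => y) x 1.
Proof. apply derivable_pt_lim_id. Qed.

Lemma mvt_le f f' a b m : a <= b ->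
  (forall c, a <= c <= b -> derivable_pt_lim f c (f' c)) ->
  (forall c, a < c < b -> f' c <= m) -> f b - f a <= m * (b - a).
Proof.
  intros Hab Hd Hm. destruct (Req_dec a b) as [->|Hne].
  - lra.
  - destruct (MVT_cor2 f f' a b) as [c [Hc1 Hc2]]; [lra|auto|].
    rewrite Hc1. apply Rmult_le_compat_r; [lra|]. apply Hm; auto.
Qed.
Lemma mvt_ge f f' a b m : a <= b ->
  (forall c, a <= c <= b -> derivable_pt_lim f c (f' c)) ->
  (forall c, a < c < b -> m <= f' c) -> m * (b - a) <= f b - f a.
Proof.
  intros Hab Hd Hm. destruct (Req_dec a b) as [->|Hne].
  - lra.
  - destruct (MVT_cor2 f f' a b) as [c [Hc1 Hc2]]; [lra|auto|].
    rewrite Hc1. apply Rmult_le_compat_r; [lra|]. apply Hm; auto.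
Qed.
Lemma mvt_cmp f f' g g' a b : a <= b ->
  (forall c, a <= c <= b -> derivable_pt_lim f c (f' c)) ->
  (forall c, a <= c <= b -> derivable_pt_lim g c (g' c)) ->
  (forall c, a < c < b -> f' c <= g' c) -> f b - f a <= g b - g a.
Proof.
  intros Hab Hf Hg Hc.
  assert (H := mvt_le (fun y => f y - g y) (fun y => f' y - g' y) a b 0 Hab).
  assert ((fun y => f y - g y) b - (fun y => f y - g y) a <= 0 * (b - a)).
  { apply H. intros; apply dminus; auto. intros c Hc'; specialize (Hc c Hc'); lra. }
  simpl in H0. lra.
Qed.

Lemma pow_lt_strict x y m : 0 <= x < y -> (1 <= m)%nat -> x ^ m < y ^ m.
Proof.
  intros Hxy Hm. induction m as [|m IH]; [lia|].
  destruct (Nat.eq_dec m 0) as [->|Hm0]; [simpl; lra|].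
  simpl. assert (x ^ m < y ^ m) by (apply IH; lia).
  assert (0 <= x ^ m) by (apply pow_le; lra).
  nra.
Qed.
Lemma pow_le_inv x y m : 0 <= x -> 0 <= y -> (1 <= m)%nat -> x ^ m <= y ^ m -> x <= y.
Proof.
  intros Hx Hy Hm H. destruct (Rle_lt_dec x y) as [|Hlt]; auto.
  exfalso. assert (y ^ m < x ^ m) by (apply pow_lt_strict; auto; lra). lra.
Qed.
Lemma pow_le_self x m : 0 <= x <= 1 -> (1 <= m)%nat -> x ^ m <= x.
Proof.
  intros Hx Hm. induction m as [|m IH]; [lia|].
  destruct (Nat.eq_dec m 0) as [->|Hm0]; [simpl; lra|].
  simpl. assert (x ^ m <= x) by (apply IH; lia).
  assert (0 <= x ^ m) by (apply pow_le; lra). nra.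
Qed.
Lemma root_min x m k : 0 <= x -> (1 <= m)%nat -> k <= x ^ m -> Rmin 1 k <= x.
Proof.
  intros Hx Hm Hk. destruct (Rle_lt_dec 1 x).
  - assert (Rmin 1 k <= 1) by apply Rmin_l. lra.
  - assert (x ^ m <= x) by (apply pow_le_self; auto; lra).
    assert (Rmin 1 k <= k) by apply Rmin_r. lra.
Qed.
Lemma exp_pow y m : exp y ^ m = exp (INR m * y).
Proof.
  induction m as [|m IH]; simpl pow.
  - simpl. rewrite Rmult_0_l, exp_0. reflexivity.
  - rewrite IH, <- exp_plus, S_INR. f_equal. ring.
Qed.

Lemma sinh_nonneg x : 0 <= x -> 0 <= sinh x.
Proof. intros Hx. destruct (Req_dec x 0) as [->|]; [rewrite sinh_0; lra|].
  rewrite <- sinh_0. left. apply sinh_lt. lra. Qed.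
Lemma sinh_pos x : 0 < x -> 0 < sinh x.
Proof. intros Hx. rewrite <- sinh_0. apply sinh_lt. lra. Qed.
Lemma sinh_mono x y : x <= y -> sinh x <= sinh y.
Proof. intros H. destruct (Req_dec x y) as [->|]; [lra|]. left; apply sinh_lt; lra. Qed.
Lemma cosh_mono x y : 0 <= x <= y -> cosh x <= cosh y.
Proof.
  intros H. assert (Hm := mvt_cmp (fun _ => 0) (fun _ => 0) cosh sinh x y).
  assert (0 - 0 <= cosh y - cosh x); [|lra].
  apply Hm; try lra.
  - intros; apply derivable_pt_lim_const.
  - intros; apply derivable_pt_lim_cosh.
  - intros c Hc; apply sinh_nonneg; lra.
Qed.
Lemma cosh_ge1 x : 0 <= x -> 1 <= cosh x.
Proof. intros; rewrite <- cosh_0; apply cosh_mono; lra. Qed.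

Lemma DM_pos M n u : 0 < u -> 0 < DM M n u.
Proof.
  intros Hu. assert (0 < sinh (u/2)) by (apply sinh_pos; lra).
  assert (0 < cosh (u/2)) by (assert (1 <= cosh (u/2)) by (apply cosh_ge1; lra); lra).
  assert (0 < sinh u) by (apply sinh_pos; lra).
  destruct M; unfold DM; repeat (first [assumption | apply pow_lt | apply Rmult_lt_0_compat]); lra.
Qed.
Lemma DM_nonneg M n u : 0 <= u -> 0 <= DM M n u.
Proof.
  intros Hu. destruct (Req_dec u 0) as [->|].
  - assert (0 <= sinh (0/2)) by (apply sinh_nonneg; lra).
    assert (0 <= cosh (0/2)) by (assert (1 <= cosh (0/2)) by (apply cosh_ge1; lra); lra).
    assert (0 <= sinh 0) by (apply sinh_nonneg; lra).
    destruct M; unfold DM; repeat (first [assumption | apply pow_le | apply Rmult_le_pos]); lra.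
  - left; apply DM_pos; lra.
Qed.
Lemma DM_mono M n x y : 0 <= x <= y -> DM M n x <= DM M n y.
Proof.
  intros H.
  assert (0 <= sinh (x/2)) by (apply sinh_nonneg; lra).
  assert (sinh (x/2) <= sinh (y/2)) by (apply sinh_mono; lra).
  assert (1 <= cosh (x/2)) by (apply cosh_ge1; lra).
  assert (cosh (x/2) <= cosh (y/2)) by (apply cosh_mono; lra).
  assert (0 <= sinh x) by (apply sinh_nonneg; lra).
  assert (sinh x <= sinh y) by (apply sinh_mono; lra).
  assert (Hp2 : 0 <= 2 ^ (n-1)) by (apply pow_le; lra).
  destruct M; unfold DM; try (apply pow_incr; lra);
  apply Rmult_le_compat; try (apply Rmult_le_pos); try apply pow_le; try lra;
  try (apply pow_incr; lra);
  apply Rmult_le_compat; try apply pow_le; try lra; apply pow_incr; lra.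
Qed.

Definition setup M n r (h f1 f2 : R -> R) : Prop :=
  (2 <= n)%nat /\ 0 < r /\
  (forall u, -r < u < r -> derivable_pt_lim h u (f1 u) /\ derivable_pt_lim f1 u (f2 u)) /\
  (forall u, 0 <= u < r -> f2 u * f1 u ^ (n-1) = exp (h u) * DM M n u) /\
  blows_up_at r h /\ (forall u, -r < u < r -> h (-u) = h u).

Lemma S1 M n r h f1 f2 : setup M n r h f1 f2 -> f1 0 = 0.
Proof.
  intros (Hn & Hr & Hd & HE & Hb & Hev).
  destruct (Hd 0) as [H0 _]; [lra|].
  destruct (Req_dec (f1 0) 0) as [|Hne]; auto. exfalso.
  assert (Hl : 0 < Rabs (f1 0)) by (apply Rabs_pos_lt; auto).
  destruct (H0 _ Hl) as [del Hdel].
  set (t := Rmin del r / 2).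
  assert (Ht : 0 < t).
  { unfold t. assert (0 < Rmin del r) by (apply Rmin_glb_lt; [apply cond_pos|lra]). lra. }
  assert (Ht2 : t < del /\ t < r).
  { unfold t. assert (Rmin del r <= del) by apply Rmin_l. assert (Rmin del r <= r) by apply Rmin_r.
    assert (0 < Rmin del r) by (apply Rmin_glb_lt; [apply cond_pos|lra]). lra. }
  assert (A1 := Hdel t ltac:(lra) ltac:(rewrite Rabs_pos_eq; lra)).
  assert (A2 := Hdel (-t) ltac:(lra) ltac:(rewrite Rabs_Ropp, Rabs_pos_eq; lra)).
  rewrite Rplus_0_l in A1, A2. rewrite (Hev t) in A2 by lra.
  replace ((h t - h 0) / - t) with (- ((h t - h 0) / t)) in A2 by (field; lra).
  set (q := (h t - h 0) / t) in *.
  assert (Rabs (2 * f1 0) <= Rabs (f1 0 - q) + Rabs (q + f1 0)).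
  { replace (2 * f1 0) with ((f1 0 - q) + (q + f1 0)) by ring. apply Rabs_triang. }
  rewrite Rabs_mult, (Rabs_pos_eq 2) in H by lra.
  rewrite <- Rabs_Ropp in A1. replace (- (q - f1 0)) with (f1 0 - q) in A1 by ring.
  rewrite <- Rabs_Ropp in A2. replace (- (- q - f1 0)) with (q + f1 0) in A2 by ring.
  lra.
Qed.

Lemma S2 M n r h f1 f2 : setup M n r h f1 f2 -> forall u, 0 < u < r -> f1 u <> 0.
Proof.
  intros (Hn & Hr & Hd & HE & Hb & Hev) u Hu Hz.
  specialize (HE u ltac:(lra)). rewrite Hz, pow_i, Rmult_0_r in HE by lia.
  assert (0 < exp (h u) * DM M n u) by (apply Rmult_lt_0_compat; [apply exp_pos|apply DM_pos; lra]).
  lra.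
Qed.

Lemma cont_of M n r h f1 f2 : setup M n r h f1 f2 -> forall u, -r < u < r -> continuity_pt f1 u.
Proof.
  intros (Hn & Hr & Hd & _) u Hu. apply derivable_continuous_pt.
  exists (f2 u). apply (proj2 (Hd u Hu)).
Qed.
Lemma contH_of M n r h f1 f2 : setup M n r h f1 f2 -> forall u, -r < u < r -> continuity_pt h u.
Proof.
  intros (Hn & Hr & Hd & _) u Hu. apply derivable_continuous_pt.
  exists (f1 u). apply (proj1 (Hd u Hu)).
Qed.

Lemma S3 M n r h f1 f2 : setup M n r h f1 f2 -> forall u, 0 < u < r -> 0 < f1 u.
Proof.
  intros Hs u0 Hu0. pose proof (S2 _ _ _ _ _ _ Hs) as HS2.
  destruct Hs as (Hn & Hr & Hd & HE & Hb & Hev) eqn:Hs'.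
  destruct (Rlt_le_dec 0 (f1 u0)) as [|Hneg]; auto. exfalso.
  assert (Hneg' : f1 u0 < 0) by (destruct Hneg; auto; exfalso; apply (HS2 u0); auto).
  assert (Hall : forall u, u0 <= u < r -> f1 u < 0).
  { intros u Hu. destruct (Rlt_le_dec (f1 u) 0) as [|Hp]; auto. exfalso.
    assert (Hp' : 0 < f1 u) by (destruct Hp; auto; exfalso; apply (HS2 u); [lra|auto]).
    assert (u0 < u) by (destruct (Req_dec u0 u) as [->|]; lra).
    destruct (IVT_interv f1 u0 u) as [z [Hz1 Hz2]]; auto.
    - intros a Ha. apply (cont_of _ _ _ _ _ _ Hs). lra.
    - apply (HS2 z); auto; lra. }
  assert (Hdec : forall u, u0 <= u < r -> h u <= h u0).
  { intros u Hu. assert (h u - h u0 <= 0 * (u - u0)); [|lra].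
    apply (mvt_le h f1); try lra.
    - intros c Hc. apply (Hd c). lra.
    - intros c Hc. left. apply Hall. lra. }
  destruct (Hb (h u0)) as [d [Hd0 Hdd]].
  set (u := Rmax u0 (r - d/2)).
  assert (u0 <= u) by apply Rmax_l. assert (r - d/2 <= u) by apply Rmax_r.
  assert (u < r) by (unfold u; apply Rmax_lub_lt; lra).
  specialize (Hdd u ltac:(lra)). specialize (Hdec u ltac:(lra)). lra.
Qed.

Lemma S4 M n r h f1 f2 : setup M n r h f1 f2 -> forall u, 0 <= u < r -> 0 <= f1 u.
Proof.
  intros Hs u Hu. destruct (Req_dec u 0) as [->|].
  - rewrite (S1 _ _ _ _ _ _ Hs). lra.
  - left. apply (S3 _ _ _ _ _ _ Hs). lra.
Qed.

Lemma S5 M n r h f1 f2 : setup M n r h f1 f2 -> forall x y, 0 <= x <= y -> y < r -> h x <= h y.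
Proof.
  intros Hs x y Hxy Hy. pose proof (S4 _ _ _ _ _ _ Hs) as H4.
  destruct Hs as (Hn & Hr & Hd & _).
  assert (0 * (y - x) <= h y - h x); [|lra].
  apply (mvt_ge h f1); try lra.
  - intros c Hc; apply (Hd c); lra.
  - intros c Hc; apply H4; lra.
Qed.

Lemma Sder M n r h f1 f2 : setup M n r h f1 f2 -> forall u, 0 <= u < r ->
  derivable_pt_lim (fun y => f1 y ^ n) u (INR n * (exp (h u) * DM M n u)).
Proof.
  intros Hs u Hu. destruct Hs as (Hn & Hr & Hd & HE & _).
  eapply dval. apply dpow. apply (proj2 (Hd u ltac:(lra))).
  rewrite <- HE by lra. replace (pred n) with (n - 1)%nat by lia. ring.
Qed.

Lemma exp_mono x y : x <= y -> exp x <= exp y.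
Proof. intros [H|H]; [left; apply exp_increasing; auto|rewrite H; lra]. Qed.

Definition d1 M n := DM M n 1.
Definition betaL M n L := Rmin 1 (INR n * d1 M n * exp (-L)).
Definition u1L M n L := 2 + ln 2 / betaL M n L.
Definition kk M n := (INR n + 1) * d1 M n / 2.
Definition gam M n := Rmin 1 (kk M n).
Definition TL M n L := u1L M n L + (INR n + 1) * exp (L / (INR n + 1)) / gam M n.

Lemma F3 M n r h f1 f2 L : setup M n r h f1 f2 -> -L <= h 0 -> r <= TL M n L.
Proof.
  intros Hs HL. pose proof (S5 _ _ _ _ _ _ Hs) as H5. pose proof (S4 _ _ _ _ _ _ Hs) as H4.
  pose proof (Sder _ _ _ _ _ _ Hs) as HP.
  destruct Hs as (Hn & Hr & Hd & HE & Hb & Hev).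
  destruct (Rle_lt_dec r (TL M n L)) as [|HT]; auto. exfalso.
  assert (Hd1 : 0 < d1 M n) by (apply DM_pos; lra).
  assert (Hn0 : 2 <= INR n) by (replace 2 with (INR 2) by (simpl; ring); apply le_INR; auto).
  assert (Hbeta : 0 < betaL M n L).
  { unfold betaL. apply Rmin_glb_lt; [lra|]. apply Rmult_lt_0_compat; [nra|apply exp_pos]. }
  assert (Hln2 : 0 < ln 2) by (pose proof ln_lt_2; lra).
  assert (Hu1 : 2 < u1L M n L).
  { unfold u1L. assert (0 < ln 2 / betaL M n L) by (apply Rdiv_lt_0_compat; auto). lra. }
  assert (Hgam : 0 < gam M n).
  { unfold gam, kk. apply Rmin_glb_lt; [lra|]. apply Rdiv_lt_0_compat; [|lra]. nra. }
  assert (HTu : u1L M n L <= TL M n L).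
  { unfold TL. assert (0 <= (INR n + 1) * exp (L / (INR n + 1)) / gam M n); [|lra].
    apply Rmult_le_pos; [|left; apply Rinv_0_lt_compat; auto].
    apply Rmult_le_pos; [lra|left; apply exp_pos]. }
  assert (hge : forall u, 0 <= u < r -> h 0 <= h u) by (intros; apply H5; lra).
  assert (Ha : forall u, 2 <= u < r -> betaL M n L <= f1 u).
  { intros u Hu. unfold betaL. apply (root_min _ n); [apply H4; lra|lia|].
    assert (Hm : (INR n * d1 M n * exp (-L)) * (u - 1) <= f1 u ^ n - f1 1 ^ n).
    { apply (mvt_ge (fun y => f1 y ^ n) (fun y => INR n * (exp (h y) * DM M n y))); [lra| |].
      - intros c Hc. apply HP. lra.
      - intros c Hc. rewrite Rmult_assoc. apply Rmult_le_compat_l; [lra|].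
        assert (d1 M n <= DM M n c) by (unfold d1; apply DM_mono; lra).
        assert (exp (-L) <= exp (h c)) by (apply exp_mono; assert (h 0 <= h c) by (apply hge; lra); lra).
        rewrite (Rmult_comm (d1 M n)).
        apply Rmult_le_compat; [left; apply exp_pos|lra|auto|auto]. }
    assert (0 <= f1 1 ^ n) by (apply pow_le; apply H4; lra).
    assert (0 < INR n * d1 M n * exp (- L)) by (apply Rmult_lt_0_compat; [nra|apply exp_pos]).
    assert (0 <= (INR n * d1 M n * exp (- L)) * (u - 2)) by (apply Rmult_le_pos; lra).
    lra. }
  set (u1 := u1L M n L) in *.
  assert (Hb1 : h 1 + ln 2 <= h u1).
  { assert (Hm : betaL M n L * (u1 - 2) <= h u1 - h 2).
    { apply (mvt_ge h f1); [lra| |].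
      - intros c Hc. apply (Hd c). lra.
      - intros c Hc. apply Ha. lra. }
    assert (betaL M n L * (u1 - 2) = ln 2) by (unfold u1, u1L; field; lra).
    assert (h 1 <= h 2) by (apply H5; lra). lra. }
  assert (Hc : forall u, u1 <= u < r -> kk M n * exp (h u) <= f1 u ^ (S n)).
  { intros u Hu.
    assert (Hm : 0 * (u - 1) <= (f1 u ^ (S n) - (INR n + 1) * d1 M n * exp (h u))
                               - (f1 1 ^ (S n) - (INR n + 1) * d1 M n * exp (h 1))).
    { apply (mvt_ge (fun y => f1 y ^ (S n) - (INR n + 1) * d1 M n * exp (h y))
              (fun y => INR (S n) * f1 y ^ n * f2 y - (INR n + 1) * d1 M n * (exp (h y) * f1 y)));
        [lra| |].
      - intros c Hc. apply dminus.
        + eapply dval. apply dpow. apply (proj2 (Hd c ltac:(lra))). simpl pred. reflexivity.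
        + apply dscal. apply dexp. apply (proj1 (Hd c ltac:(lra))).
      - intros c Hc. rewrite S_INR.
        assert (Hf : f1 c ^ n = f1 c * f1 c ^ (n - 1)).
        { replace n with (S (n - 1)) at 1 by lia. reflexivity. }
        rewrite Hf.
        replace ((INR n + 1) * (f1 c * f1 c ^ (n - 1)) * f2 c - (INR n + 1) * d1 M n * (exp (h c) * f1 c))
          with ((INR n + 1) * f1 c * (f2 c * f1 c ^ (n - 1) - d1 M n * exp (h c))) by ring.
        rewrite HE by lra.
        apply Rmult_le_pos; [apply Rmult_le_pos; [lra|apply H4; lra]|].
        assert (d1 M n <= DM M n c) by (unfold d1; apply DM_mono; lra).
        assert (0 < exp (h c)) by apply exp_pos. nra. }
    assert (0 <= f1 1 ^ S n) by (apply pow_le; apply H4; lra).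
    assert (exp (h 1 + ln 2) <= exp (h u)) by (apply exp_mono; assert (h u1 <= h u) by (apply H5; lra); lra).
    rewrite exp_plus, exp_ln in H0 by lra.
    assert (0 <= (INR n + 1) * d1 M n * (exp (h u) / 2 - exp (h 1))) by (apply Rmult_le_pos; [nra|lra]).
    unfold kk. lra. }
  set (g := fun y => - (INR n + 1) * exp (- / (INR n + 1) * h y)).
  assert (Hdd : forall u, u1 <= u < r -> gam M n <= f1 u * exp (- / (INR n + 1) * h u)).
  { intros u Hu. unfold gam. apply (root_min _ (S n)).
    - apply Rmult_le_pos; [apply H4; lra|left; apply exp_pos].
    - lia.
    - rewrite Rpow_mult_distr, exp_pow, S_INR.
      replace ((INR n + 1) * (- / (INR n + 1) * h u)) with (- h u) by (field; lra).
      specialize (Hc u Hu).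
      assert (exp (h u) * exp (- h u) = 1) by (rewrite <- exp_plus; replace (h u + - h u) with 0 by ring; apply exp_0).
      assert (0 < exp (- h u)) by apply exp_pos.
      apply (Rmult_le_compat_r (exp (- h u))) in Hc; [|lra].
      rewrite Rmult_assoc, H in Hc. lra. }
  set (u := (TL M n L + r) / 2).
  assert (Hueq : TL M n L < u /\ u < r) by (unfold u; lra).
  assert (Hm : gam M n * (u - u1) <= g u - g u1).
  { apply (mvt_ge g (fun y => f1 y * exp (- / (INR n + 1) * h y))); [lra| |].
    - intros c Hc0. unfold g. eapply dval. apply dscal. apply dexp. apply dscal.
      apply (proj1 (Hd c ltac:(lra))). cbv beta; field. lra.
    - intros c Hc0. apply Hdd. lra. }
  assert (g u <= 0).
  { unfold g. assert (0 < exp (- / (INR n + 1) * h u)) by apply exp_pos. nra. }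
  assert (exp (- / (INR n + 1) * h u1) <= exp (L / (INR n + 1))).
  { apply exp_mono. assert (h 0 <= h u1) by (apply hge; lra).
    assert (0 < / (INR n + 1)) by (apply Rinv_0_lt_compat; lra).
    unfold Rdiv. nra. }
  assert (Hk : u - u1 <= (INR n + 1) * exp (L / (INR n + 1)) / gam M n).
  { apply (Rmult_le_reg_l (gam M n)); auto. unfold g in *.
    replace (gam M n * ((INR n + 1) * exp (L / (INR n + 1)) / gam M n))
      with ((INR n + 1) * exp (L / (INR n + 1))) by (field; lra). nra. }
  assert (TL M n L = u1 + (INR n + 1) * exp (L / (INR n + 1)) / gam M n) by reflexivity.
  lra.
Qed.

Lemma INR_n_pos n : (2 <= n)%nat -> 2 <= INR n.
Proof. intros; replace 2 with (INR 2) by (simpl; ring); apply le_INR; auto. Qed.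

Lemma Kder M n r h f1 f2 : setup M n r h f1 f2 -> forall u, -r < u < r ->
  derivable_pt_lim (Kfun n h) u (exp (- h 0 / INR n) * f1 u).
Proof.
  intros (Hn & Hr & Hd & _) u Hu. unfold Kfun.
  eapply dval. apply dscal. eapply dval. apply (dplusc h u (f1 u) (- h 0)).
  apply (Hd u Hu). reflexivity. reflexivity.
Qed.

Lemma K0 n h : Kfun n h 0 = 0.
Proof. unfold Kfun. ring. Qed.

Lemma cE n a : INR n <> 0 -> exp (a / INR n) * exp (- a / INR n) = 1.
Proof. intros. rewrite <- exp_plus. replace (a / INR n + - a / INR n) with 0 by (field; auto). apply exp_0. Qed.

Lemma En n a : INR n <> 0 -> exp (- a / INR n) ^ n = exp (- a).
Proof. intros. rewrite exp_pow. f_equal. field. auto. Qed.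

Lemma PKder M n r h f1 f2 : setup M n r h f1 f2 -> forall u, 0 <= u < r ->
  derivable_pt_lim (fun y => (exp (- h 0 / INR n) * f1 y) ^ n) u
    (INR n * (exp (h u - h 0) * DM M n u)).
Proof.
  intros Hs u Hu. pose proof Hs as (Hn & Hr & Hd & HE & _).
  assert (HnR : INR n <> 0) by (pose proof (INR_n_pos n Hn); lra).
  set (E := exp (- h 0 / INR n)).
  eapply dval. apply (derivable_pt_lim_ext (fun y => E ^ n * f1 y ^ n)).
  { intros; rewrite Rpow_mult_distr; reflexivity. }
  apply dscal. apply (Sder _ _ _ _ _ _ Hs u Hu).
  unfold E. rewrite En by auto. unfold Rminus. rewrite exp_plus. ring.
Qed.

Lemma one_le_pow y m : 1 <= y -> (1 <= m)%nat -> y <= y ^ m.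
Proof. intros. replace y with (y ^ 1) at 1 by ring. apply Rle_pow; auto. Qed.

Definition NN M n A := Rmax 1 (INR n * A * DM M n A).

Lemma F4i M n r h f1 f2 A : setup M n r h f1 f2 -> 0 < A < r -> forall t, 0 <= t <= A ->
  exp (- h 0 / INR n) * f1 t <= NN M n A * exp (h t - h 0).
Proof.
  intros Hs HA t Ht. pose proof (S5 _ _ _ _ _ _ Hs) as H5. pose proof (S4 _ _ _ _ _ _ Hs) as H4.
  pose proof (S1 _ _ _ _ _ _ Hs) as H1.
  pose proof (PKder _ _ _ _ _ _ Hs) as HP.
  pose proof Hs as (Hn & Hr & Hd & HE & _).
  assert (Hn2 := INR_n_pos n Hn).
  set (E := exp (- h 0 / INR n)) in *.
  assert (HEp : 0 < E) by apply exp_pos.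
  assert (HN1 : 1 <= NN M n A) by apply Rmax_l.
  assert (HN2 : INR n * A * DM M n A <= NN M n A) by apply Rmax_r.
  assert (Hht : 0 <= h t - h 0) by (assert (h 0 <= h t) by (apply H5; lra); lra).
  assert (Hex : 1 <= exp (h t - h 0)) by (rewrite <- exp_0; apply exp_mono; lra).
  assert (Hm : (E * f1 t) ^ n - (E * f1 0) ^ n <= (INR n * (exp (h t - h 0) * DM M n A)) * (t - 0)).
  { apply (mvt_le (fun y => (E * f1 y) ^ n) (fun y => INR n * (exp (h y - h 0) * DM M n y))); [lra| |].
    - intros c Hc. apply HP. lra.
    - intros c Hc. apply Rmult_le_compat_l; [lra|].
      apply Rmult_le_compat; [left; apply exp_pos|apply DM_nonneg; lra| |].
      + apply exp_mono. assert (h c <= h t) by (apply H5; lra). lra.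
      + apply DM_mono; lra. }
  rewrite H1, Rmult_0_r, pow_i in Hm by lia.
  apply (pow_le_inv _ _ n); [apply Rmult_le_pos; [lra|apply H4; lra]| |lia|].
  { apply Rmult_le_pos; lra. }
  assert (HDA : 0 <= DM M n A) by (apply DM_nonneg; lra).
  assert ((INR n * (exp (h t - h 0) * DM M n A)) * (t - 0) <= NN M n A * exp (h t - h 0)).
  { replace ((INR n * (exp (h t - h 0) * DM M n A)) * (t - 0)) with
      (exp (h t - h 0) * (INR n * t * DM M n A)) by ring.
    rewrite (Rmult_comm (NN M n A)). apply Rmult_le_compat_l; [lra|].
    assert (INR n * t * DM M n A <= INR n * A * DM M n A).
    { apply Rmult_le_compat_r; auto. apply Rmult_le_compat_l; lra. }
    lra. }
  assert (NN M n A * exp (h t - h 0) <= (NN M n A * exp (h t - h 0)) ^ n).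
  { apply one_le_pow; [|lia]. nra. }
  lra.
Qed.

Lemma F4ii M n r h f1 f2 A : setup M n r h f1 f2 -> 0 < A < r ->
  exp (h 0 / INR n) * NN M n A * A <= 1/2 ->
  forall u, 0 <= u <= A ->
  exp (h u - h 0) <= 1 / (1 - exp (h 0 / INR n) * NN M n A * A).
Proof.
  intros Hs HA Hx u Hu. pose proof (F4i _ _ _ _ _ _ A Hs HA) as Hi.
  pose proof Hs as (Hn & Hr & Hd & HE & _).
  assert (Hn2 := INR_n_pos n Hn).
  set (c := exp (h 0 / INR n)) in *. set (E := exp (- h 0 / INR n)) in *.
  assert (HcE : c * E = 1) by (apply cE; lra).
  assert (Hc : 0 < c) by apply exp_pos.
  assert (HN1 : 1 <= NN M n A) by apply Rmax_l.
  assert (Hm : (- exp (- (h u - h 0))) - (- exp (- (h 0 - h 0))) <= (c * NN M n A) * (u - 0)).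
  { apply (mvt_le (fun y => - exp (- (h y - h 0))) (fun y => exp (- (h y - h 0)) * f1 y)); [lra| |].
    - intros y Hy. eapply dval. apply (derivable_pt_lim_opp (fun y => exp (- (h y - h 0)))).
      apply dexp. eapply dval. apply derivable_pt_lim_opp. apply dplusc.
      apply (Hd y ltac:(lra)). reflexivity. cbv beta. ring.
    - intros y Hy. specialize (Hi y ltac:(lra)).
      assert (f1 y <= c * NN M n A * exp (h y - h 0)).
      { apply (Rmult_le_compat_l c) in Hi; [|lra]. rewrite <- Rmult_assoc, HcE, Rmult_1_l in Hi. lra. }
      assert (0 < exp (- (h y - h 0))) by apply exp_pos.
      assert (exp (- (h y - h 0)) * exp (h y - h 0) = 1) by (rewrite <- exp_plus; replace (- (h y - h 0) + (h y - h 0)) with 0 by ring; apply exp_0).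
      apply (Rmult_le_compat_l (exp (- (h y - h 0)))) in H; [|lra].
      replace (exp (- (h y - h 0)) * (c * NN M n A * exp (h y - h 0))) with
        (c * NN M n A * (exp (- (h y - h 0)) * exp (h y - h 0))) in H by ring.
      rewrite H1 in H. lra. }
  replace (- (h 0 - h 0)) with 0 in Hm by ring. rewrite exp_0 in Hm.
  assert (c * NN M n A * u <= c * NN M n A * A).
  { apply Rmult_le_compat_l; [nra|lra]. }
  assert (He : 1 - c * NN M n A * A <= exp (- (h u - h 0))) by lra.
  assert (Hprod : exp (- (h u - h 0)) * exp (h u - h 0) = 1) by (rewrite <- exp_plus; replace (- (h u - h 0) + (h u - h 0)) with 0 by ring; apply exp_0).
  assert (0 < exp (h u - h 0)) by apply exp_pos.
  apply (Rmult_le_reg_l (1 - c * NN M n A * A)); [lra|].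
  replace ((1 - c * NN M n A * A) * (1 / (1 - c * NN M n A * A))) with 1 by (field; lra).
  rewrite <- Hprod. apply Rmult_le_compat_r; lra.
Qed.

Lemma F4iii M n r h f1 f2 A : setup M n r h f1 f2 -> 0 < A < r ->
  exp (h 0 / INR n) * NN M n A * A <= 1/2 ->
  forall u, 0 <= u <= A -> Kfun n h u <= 2 * NN M n A * A.
Proof.
  intros Hs HA Hx u Hu. pose proof (F4i _ _ _ _ _ _ A Hs HA) as Hi.
  pose proof (F4ii _ _ _ _ _ _ A Hs HA Hx) as Hii.
  pose proof (Kder _ _ _ _ _ _ Hs) as HK.
  assert (HN1 : 1 <= NN M n A) by apply Rmax_l.
  assert (Hm : Kfun n h u - Kfun n h 0 <= (2 * NN M n A) * (u - 0)).
  { apply (mvt_le _ (fun y => exp (- h 0 / INR n) * f1 y)); [lra| |].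
    - intros y Hy. apply HK. lra.
    - intros y Hy. specialize (Hi y ltac:(lra)). specialize (Hii y ltac:(lra)).
      set (x := exp (h 0 / INR n) * NN M n A * A) in *.
      assert (0 < exp (h 0 / INR n)) by apply exp_pos.
      assert (0 <= x) by (unfold x; apply Rmult_le_pos; [nra|lra]).
      assert (1 / (1 - x) <= 2) by (apply (Rmult_le_reg_l (1 - x)); [lra|]; replace ((1 - x) * (1 / (1 - x))) with 1 by (field; lra); lra).
      assert (NN M n A * exp (h y - h 0) <= NN M n A * 2) by (apply Rmult_le_compat_l; lra).
      lra. }
  rewrite K0 in Hm. nra.
Qed.

Lemma F5 M n r h f1 f2 s h' g1 g2 A : setup M n r h f1 f2 -> setup M n s h' g1 g2 ->
  0 < A -> A < r -> A < s -> forall u, 0 <= u <= A ->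
  Kfun n h u <= exp (h A - h 0) * Kfun n h' u.
Proof.
  intros Hs Hs' HA Hr Hs0 u Hu.
  pose proof (S5 _ _ _ _ _ _ Hs) as H5. pose proof (S5 _ _ _ _ _ _ Hs') as H5'.
  pose proof (S4 _ _ _ _ _ _ Hs) as H4. pose proof (S4 _ _ _ _ _ _ Hs') as H4'.
  pose proof (PKder _ _ _ _ _ _ Hs) as HP. pose proof (PKder _ _ _ _ _ _ Hs') as HP'.
  pose proof (Kder _ _ _ _ _ _ Hs) as HK. pose proof (Kder _ _ _ _ _ _ Hs') as HK'.
  pose proof (S1 _ _ _ _ _ _ Hs) as H1. pose proof (S1 _ _ _ _ _ _ Hs') as H1'.
  pose proof Hs as (Hn & _).
  set (lam := exp (h A - h 0)).
  assert (Hlam : 1 <= lam) by (unfold lam; rewrite <- exp_0; apply exp_mono; assert (h 0 <= h A) by (apply H5; lra); lra).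
  set (E := exp (- h 0 / INR n)). set (E' := exp (- h' 0 / INR n)).
  assert (Hder : forall t, 0 <= t <= A -> E * f1 t <= lam * (E' * g1 t)).
  { intros t Ht.
    assert (Hm : (E * f1 t) ^ n - (E * f1 0) ^ n <= lam * (E' * g1 t) ^ n - lam * (E' * g1 0) ^ n).
    { apply (mvt_cmp (fun y => (E * f1 y) ^ n) (fun y => INR n * (exp (h y - h 0) * DM M n y))
               (fun y => lam * (E' * g1 y) ^ n) (fun y => lam * (INR n * (exp (h' y - h' 0) * DM M n y))));
        [lra| | |].
      - intros c Hc. apply HP. lra.
      - intros c Hc. apply dscal. apply HP'. lra.
      - intros c Hc. assert (Hn2 := INR_n_pos n Hn).
        assert (exp (h c - h 0) <= lam) by (apply exp_mono; assert (h c <= h A) by (apply H5; lra); lra).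
        assert (1 <= exp (h' c - h' 0)) by (rewrite <- exp_0; apply exp_mono; assert (h' 0 <= h' c) by (apply H5'; lra); lra).
        assert (0 <= DM M n c) by (apply DM_nonneg; lra).
        assert (0 < exp (h c - h 0)) by apply exp_pos.
        assert (exp (h c - h 0) * DM M n c <= lam * DM M n c) by (apply Rmult_le_compat_r; lra).
        assert (DM M n c <= exp (h' c - h' 0) * DM M n c) by nra.
        assert (lam * DM M n c <= lam * (exp (h' c - h' 0) * DM M n c)) by (apply Rmult_le_compat_l; lra).
        assert (0 <= INR n) by lra.
        replace (lam * (INR n * (exp (h' c - h' 0) * DM M n c))) with (INR n * (lam * (exp (h' c - h' 0) * DM M n c))) by ring.
        apply Rmult_le_compat_l; lra. }
    rewrite H1, H1', Rmult_0_r, Rmult_0_r, pow_i in Hm by lia.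
    assert (0 <= E) by (left; apply exp_pos). assert (0 <= E') by (left; apply exp_pos).
    apply (pow_le_inv _ _ n); [apply Rmult_le_pos; [lra|apply H4; lra]| |lia|].
    { apply Rmult_le_pos; [lra|apply Rmult_le_pos; [lra|apply H4'; lra]]. }
    rewrite (Rpow_mult_distr lam).
    assert (0 <= (E' * g1 t) ^ n) by (apply pow_le; apply Rmult_le_pos; [lra|apply H4'; lra]).
    assert (lam <= lam ^ n) by (apply one_le_pow; [lra|lia]).
    nra. }
  assert (Hm : Kfun n h u - Kfun n h 0 <= lam * Kfun n h' u - lam * Kfun n h' 0).
  { apply (mvt_cmp _ (fun y => E * f1 y) (fun y => lam * Kfun n h' y) (fun y => lam * (E' * g1 y)));
      [lra| | |].
    - intros c Hc. apply HK. lra.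
    - intros c Hc. apply dscal. apply HK'. lra.
    - intros c Hc. apply Hder. lra. }
  rewrite !K0 in Hm. lra.
Qed.

Lemma cont_unfold f u : continuity_pt f u -> forall eps, 0 < eps ->
  exists d, 0 < d /\ forall v, Rabs (v - u) < d -> Rabs (f v - f u) < eps.
Proof.
  intros Hc eps He. destruct (Hc eps He) as [alp [Ha H]].
  exists alp. split; auto. intros v Hv.
  destruct (Req_dec u v) as [->|Hne].
  - unfold Rminus; rewrite Rplus_opp_r, Rabs_R0; auto.
  - apply (H v). split; [split; [exact I|auto]|]. exact Hv.
Qed.

Lemma nat_big R0 : exists N, forall m, (N <= m)%nat -> R0 < INR m + 1.
Proof.
  destruct (INR_archimed 1 R0) as [N HN]; [lra|]. exists N. intros m Hm.
  apply le_INR in Hm. lra.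
Qed.

Lemma limit_construct (F : R -> R -> R) :
  (forall A eps, 0 < A -> 0 < eps -> exists R0, 0 < R0 /\ forall r s, R0 < r -> R0 < s ->
     forall u, 0 <= u <= A -> Rabs (F r u - F s u) < eps) ->
  (forall r u, 0 <= u < r -> continuity_pt (F r) u) ->
  exists K : R -> R,
    (forall u, 0 <= u -> forall eps, 0 < eps ->
       exists d, 0 < d /\ forall v, 0 <= v -> Rabs (v - u) < d ->
         Rabs (K v - K u) < eps) /\
    (forall A eps, 0 <= A -> 0 < eps ->
       exists R0, forall r, R0 < r -> forall u, 0 <= u <= A ->
         Rabs (F r u - K u) < eps).
Proof.
  intros HUC Hcont.
  assert (Hc : forall u, 0 <= u -> Cauchy_crit (fun m => F (INR m + 1) u)).
  { intros u Hu eps He. destruct (HUC (u + 1) eps ltac:(lra) He) as [R0 [HR0 H]].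
    destruct (nat_big R0) as [N HN]. exists N. intros p q Hp Hq. unfold Rdist.
    apply H; [apply HN; lia|apply HN; lia|lra]. }
  set (K := fun u => match Rle_dec 0 u with
                     | left H => proj1_sig (R_complete _ (Hc u H))
                     | right _ => 0 end).
  assert (Hcv : forall u, 0 <= u -> Un_cv (fun m => F (INR m + 1) u) (K u)).
  { intros u Hu. unfold K. destruct (Rle_dec 0 u) as [H|H]; [|contradiction].
    apply (proj2_sig (R_complete _ (Hc u H))). }
  assert (Hunif : forall A eps, 0 <= A -> 0 < eps ->
       exists R0, forall r, R0 < r -> forall u, 0 <= u <= A -> Rabs (F r u - K u) < eps).
  { intros A eps HA He. destruct (HUC (A + 1) (eps / 2) ltac:(lra) ltac:(lra)) as [R0 [HR0 H]].
    exists R0. intros r Hr u Hu.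
    destruct (Hcv u ltac:(lra) (eps / 2) ltac:(lra)) as [N1 HN1].
    destruct (nat_big R0) as [N2 HN2].
    set (m := Nat.max N1 N2).
    specialize (HN1 m ltac:(lia)). specialize (HN2 m ltac:(lia)). unfold Rdist in HN1.
    specialize (H r (INR m + 1) Hr HN2 u ltac:(lra)).
    replace (F r u - K u) with ((F r u - F (INR m + 1) u) + (F (INR m + 1) u - K u)) by ring.
    eapply Rle_lt_trans; [apply Rabs_triang|]. lra. }
  exists K. split; [|exact Hunif].
  intros u Hu eps He.
  destruct (Hunif (u + 1) (eps / 3) ltac:(lra) ltac:(lra)) as [R0 HR0].
  set (r := Rmax R0 (u + 1) + 1).
  assert (Hr1 : R0 < r) by (unfold r; pose proof (Rmax_l R0 (u+1)); lra).
  assert (Hr2 : u + 1 < r) by (unfold r; pose proof (Rmax_r R0 (u+1)); lra).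
  destruct (cont_unfold _ _ (Hcont r u ltac:(lra)) (eps / 3) ltac:(lra)) as [d [Hd Hdd]].
  exists (Rmin d 1). split; [apply Rmin_glb_lt; lra|].
  intros v Hv Hvu.
  assert (Hm1 : Rmin d 1 <= d) by apply Rmin_l. assert (Hm2 : Rmin d 1 <= 1) by apply Rmin_r.
  assert (Hv1 : v <= u + 1) by (apply Rabs_def2 in Hvu; lra).
  specialize (Hdd v ltac:(lra)).
  pose proof (HR0 r Hr1 v ltac:(lra)) as A1. pose proof (HR0 r Hr1 u ltac:(lra)) as A2.
  replace (K v - K u) with (- (F r v - K v) + (F r v - F r u) + (F r u - K u)) by ring.
  eapply Rle_lt_trans; [apply Rabs_triang|].
  eapply Rle_lt_trans; [apply Rplus_le_compat_r; apply Rabs_triang|].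
  rewrite Rabs_Ropp. lra.
Qed.

Lemma valid_n M n : valid_dim M n -> (2 <= n)%nat.
Proof. destruct M; simpl; intros H; try lia; destruct H; lia. Qed.

Lemma setup_of M n r f : valid_dim M n -> 0 < r -> is_h M n r f ->
  exists f1 f2, setup M n r f f1 f2.
Proof.
  intros HM Hr (Han & Hode & Hb).
  destruct Hode as (f1 & f2 & Hd & HE). exists f1, f2.
  repeat split; auto.
  - apply valid_n with M; auto.
  - apply (Hd u H).
  - apply (Hd u H).
  - intros u Hu. rewrite HE by auto. rewrite Rmult_1_l. reflexivity.
  - intros u Hu. destruct Han as (g & eps & _ & _ & Hg).
    rewrite (Hg u Hu), (Hg (-u)) by lra. f_equal. ring.
Qed.

Lemma Knonneg M n r h f1 f2 : setup M n r h f1 f2 -> forall u, 0 <= u < r -> 0 <= Kfun n h u.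
Proof.
  intros Hs u Hu. unfold Kfun. apply Rmult_le_pos; [left; apply exp_pos|].
  assert (h 0 <= h u) by (apply (S5 _ _ _ _ _ _ Hs); lra). lra.
Qed.

Lemma part1 M n r h f1 f2 : setup M n r h f1 f2 ->
  solves_ode M n (exp (h 0 / INR n)) r (Kfun n h) /\
  blows_up_at r (Kfun n h) /\
  (forall u, 0 <= u < r -> 0 <= Kfun n h u).
Proof.
  intros Hs. pose proof (Kder _ _ _ _ _ _ Hs) as HK.
  pose proof Hs as (Hn & Hr & Hd & HE & Hb & _).
  assert (HnR : INR n <> 0) by (pose proof (INR_n_pos n Hn); lra).
  set (E := exp (- h 0 / INR n)) in *.
  split; [|split; [|apply (Knonneg _ _ _ _ _ _ Hs)]].
  - exists (fun u => E * f1 u), (fun u => E * f2 u). split.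
    + intros u Hu. split; [apply HK; auto|]. apply dscal. apply (Hd u Hu).
    + intros u Hu. rewrite Rpow_mult_distr.
      replace (E * f2 u * (E ^ (n - 1) * f1 u ^ (n - 1))) with
        ((E * E ^ (n - 1)) * (f2 u * f1 u ^ (n - 1))) by ring.
      replace (E * E ^ (n - 1)) with (E ^ n) by (destruct n; [lia|simpl; rewrite Nat.sub_0_r; reflexivity]).
      unfold E. rewrite En by auto. rewrite HE by auto.
      unfold Kfun. fold E. unfold E. rewrite <- (Rmult_assoc (exp (h 0 / INR n))), cE by auto. rewrite Rmult_1_l.
      unfold Rminus. rewrite exp_plus. ring.
  - intros B. destruct (Hb (h 0 + B / E)) as [d [Hd0 Hdd]].
    assert (0 < E) by apply exp_pos.
    exists d. split; auto. intros u Hu. specialize (Hdd u Hu). unfold Kfun. fold E.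
    apply (Rmult_lt_reg_l (/ E)); [apply Rinv_0_lt_compat; auto|].
    replace (/ E * (E * (h u - h 0))) with (h u - h 0) by (field; lra).
    replace (/ E * B) with (B / E) by (field; lra). lra.
Qed.

Lemma small_c M n r h f1 f2 eta : setup M n r h f1 f2 -> 0 < eta ->
  TL M n (- INR n * ln eta) < r -> exp (h 0 / INR n) < eta.
Proof.
  intros Hs He HT. pose proof Hs as (Hn & _).
  assert (Hn2 := INR_n_pos n Hn).
  destruct (Rlt_le_dec (h 0) (- (- INR n * ln eta))) as [Hl|Hl].
  - rewrite <- (exp_ln eta) by auto. apply exp_increasing.
    apply (Rmult_lt_reg_l (INR n)); [lra|].
    replace (INR n * (h 0 / INR n)) with (h 0) by (field; lra). lra.
  - exfalso. pose proof (F3 _ _ _ _ _ _ _ Hs Hl). lra.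
Qed.

Lemma bounds M n r h f1 f2 A eta : setup M n r h f1 f2 -> 0 < A < r -> 0 < eta ->
  eta * (NN M n A * A) <= 1/2 ->
  TL M n (- INR n * ln eta) < r ->
  (forall u, 0 <= u <= A -> 0 <= Kfun n h u <= 2 * (NN M n A * A)) /\
  1 <= exp (h A - h 0) /\ exp (h A - h 0) - 1 <= 2 * eta * (NN M n A * A).
Proof.
  intros Hs HA He Hx HT.
  pose proof (small_c _ _ _ _ _ _ _ Hs He HT) as Hc.
  assert (HN1 : 1 <= NN M n A) by apply Rmax_l.
  assert (HNA : 0 < NN M n A * A) by nra.
  set (c := exp (h 0 / INR n)) in *.
  assert (Hc0 : 0 < c) by apply exp_pos.
  assert (Hx' : c * NN M n A * A <= 1/2).
  { rewrite Rmult_assoc. assert (c * (NN M n A * A) <= eta * (NN M n A * A)) by (apply Rmult_le_compat_r; lra). lra. }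
  split; [|split].
  - intros u Hu. split; [apply (Knonneg _ _ _ _ _ _ Hs); lra|].
    rewrite <- Rmult_assoc. apply (F4iii _ _ _ _ _ _ A Hs HA Hx' u Hu).
  - rewrite <- exp_0; apply exp_mono. assert (h 0 <= h A) by (apply (S5 _ _ _ _ _ _ Hs); lra). lra.
  - pose proof (F4ii _ _ _ _ _ _ A Hs HA Hx' A ltac:(lra)) as Hii. fold c in Hii.
    set (x := c * NN M n A * A) in *.
    assert (0 <= x) by (unfold x; rewrite Rmult_assoc; nra).
    assert (1 / (1 - x) - 1 <= 2 * x).
    { apply (Rmult_le_reg_l (1 - x)); [lra|].
      replace ((1 - x) * (1 / (1 - x) - 1)) with x by (field; lra). nra. }
    assert (x <= eta * (NN M n A * A)) by (unfold x; rewrite Rmult_assoc; apply Rmult_le_compat_r; lra).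
    lra.
Qed.

Lemma UC M n (h : R -> R -> R) :
  (forall r, 0 < r -> exists f1 f2, setup M n r (h r) f1 f2) ->
  forall A eps, 0 < A -> 0 < eps -> exists R0, 0 < R0 /\ forall r s, R0 < r -> R0 < s ->
     forall u, 0 <= u <= A -> Rabs (Kfun n (h r) u - Kfun n (h s) u) < eps.
Proof.
  intros Hset A eps HA He.
  assert (HN1 : 1 <= NN M n A) by apply Rmax_l.
  set (NA := NN M n A * A).
  assert (HNA : 0 < NA) by (unfold NA; nra).
  set (eta := Rmin (1 / (2 * NA)) (eps / (8 * NA * NA))).
  assert (Heta : 0 < eta).
  { unfold eta. apply Rmin_glb_lt; apply Rdiv_lt_0_compat; nra. }
  assert (Heta1 : eta * NA <= 1/2).
  { assert (eta <= 1 / (2 * NA)) by apply Rmin_l.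
    apply (Rmult_le_compat_r NA) in H; [|lra].
    replace (1 / (2 * NA) * NA) with (1/2) in H by (field; lra). lra. }
  assert (Heta2 : 2 * eta * NA * (2 * NA) <= eps / 2).
  { assert (eta <= eps / (8 * NA * NA)) by apply Rmin_r.
    apply (Rmult_le_compat_r (4 * NA * NA)) in H; [|nra].
    replace (eps / (8 * NA * NA) * (4 * NA * NA)) with (eps / 2) in H by (field; lra). lra. }
  set (R0 := Rmax A (TL M n (- INR n * ln eta))).
  exists R0. assert (HR1 : A <= R0) by apply Rmax_l.
  assert (HR2 : TL M n (- INR n * ln eta) <= R0) by apply Rmax_r.
  split; [lra|].
  intros r s Hr Hs u Hu.
  destruct (Hset r ltac:(lra)) as (f1 & f2 & Sr).
  destruct (Hset s ltac:(lra)) as (g1 & g2 & Ss).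
  destruct (bounds _ _ _ _ _ _ A eta Sr ltac:(lra) Heta Heta1 ltac:(lra)) as (Br & Lr1 & Lr2).
  destruct (bounds _ _ _ _ _ _ A eta Ss ltac:(lra) Heta Heta1 ltac:(lra)) as (Bs & Ls1 & Ls2).
  fold NA in Br, Bs, Lr2, Ls2.
  pose proof (F5 _ _ _ _ _ _ _ _ _ _ A Sr Ss HA ltac:(lra) ltac:(lra) u Hu) as C1.
  pose proof (F5 _ _ _ _ _ _ _ _ _ _ A Ss Sr HA ltac:(lra) ltac:(lra) u Hu) as C2.
  specialize (Br u Hu). specialize (Bs u Hu).
  set (a := Kfun n (h r) u) in *. set (b := Kfun n (h s) u) in *.
  set (lr := exp (h r A - h r 0)) in *. set (ls := exp (h s A - h s 0)) in *.
  assert (a - b <= eps / 2).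
  { assert ((lr - 1) * b <= (2 * eta * NA) * (2 * NA)) by (apply Rmult_le_compat; lra). lra. }
  assert (b - a <= eps / 2).
  { assert ((ls - 1) * a <= (2 * eta * NA) * (2 * NA)) by (apply Rmult_le_compat; lra). lra. }
  apply Rabs_def1; lra.
Qed.

Theorem proposition3p2 (M : model_space) (n : nat) (hM : valid_dim M n)
  (h : R -> R -> R) (hh : forall r, 0 < r -> is_h M n r (h r)) :
  (forall r, 0 < r ->
     solves_ode M n (exp (h r 0 / INR n)) r (Kfun n (h r)) /\
     blows_up_at r (Kfun n (h r)) /\
     (forall u, 0 <= u < r -> 0 <= Kfun n (h r) u)) /\
  exists K : R -> R,
    (forall u, 0 <= u -> forall eps, 0 < eps ->
       exists d, 0 < d /\ forall v, 0 <= v -> Rabs (v - u) < d ->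
         Rabs (K v - K u) < eps) /\
    (forall A eps, 0 <= A -> 0 < eps ->
       exists R0, forall r, R0 < r -> forall u, 0 <= u <= A ->
         Rabs (Kfun n (h r) u - K u) < eps).
Proof.
  assert (Hset : forall r, 0 < r -> exists f1 f2, setup M n r (h r) f1 f2).
  { intros r Hr. apply setup_of; auto. }
  split.
  - intros r Hr. destruct (Hset r Hr) as (f1 & f2 & S). apply (part1 _ _ _ _ _ _ S).
  - apply (limit_construct (fun r u => Kfun n (h r) u)).
    + apply (UC M n h Hset).
    + intros r u Hu. destruct (Hset r ltac:(lra)) as (f1 & f2 & S).
      apply derivable_continuous_pt. exists (exp (- h r 0 / INR n) * f1 u).
      apply (Kder _ _ _ _ _ _ S). lra.
Qed.
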